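(* Let $G$ be a compactly generated, totally disconnected, locally compact group with modular function $\Delta$, and let $\Gamma$ be a Cayley–Abels graph for $G$. Let $\alpha$ be a vertex of $\Gamma$, let $B_1,\dots,B_n$ be the orbits of $G_\alpha$ on the set $\Gamma(\alpha)$ of neighbours of $\alpha$, and for each $i$ choose $g_i\in G$ with $\alpha g_i\in B_i$. Then $$\mathrm{im}(\Delta)=\left\langle \frac{|(\alpha g_1)G_\alpha|}{|(\alpha g_1^{-1})G_\alpha|},\dots,\frac{|(\alpha g_n)G_\alpha|}{|(\alpha g_n^{-1})G_\alpha|}\right\rangle\le \mathbb{Q}^{+}.$$ In particular, $\mathrm{im}(\Delta)$ is a finitely generated free abelian subgroup of the multiplicative group of positive rationals.
   Context: Groups act on the right. A Cayley–Abels graph for a totally disconnected, locally compact group $G$ is a connected, locally finite simple graph with an action of $G$ by automorphisms that is vertex-transitive with compact open vertex stabilizers. The modular function $\Delta\colon G\to\mathbb{R}^{+}$ is defined via a right-invariant Haar measure $\mu$ by $\mu(gA)=\Delta(g)\mu(A)$; equivalently, for any compact open subgroup $U$, $\Delta(g)=|U:U\cap g^{-1}Ug|/|g^{-1}Ug:U\cap g^{-1}Ug|$. *)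

(* Defs.v *)
From HB Require Import structures.
From mathcomp Require Import all_boot all_order all_algebra.
From mathcomp Require Import all_classical all_reals all_analysis.
From Stdlib Require Import Relation_Operators.

Set Implicit Arguments.
Unset Strict Implicit.
Unset Printing Implicit Defensive.

Import Order.TTheory GRing.Theory Num.Theory.
Local Open Scope classical_set_scope.
Local Open Scope card_scope.

Record topgroup (G : topologicalType) := TopGroup {
  gmul : G -> G -> G;
  ginv : G -> G;
  gone : G;
  gmulA : forall x y z, gmul x (gmul y z) = gmul (gmul x y) z;
  gmul1g : forall x, gmul gone x = x;
  gmulg1 : forall x, gmul x gone = x;
  gmulVg : forall x, gmul (ginv x) x = gone;
  gmulgV : forall x, gmul x (ginv x) = gone;
  gmul_cont : continuous (fun p : G * G => gmul p.1 p.2);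
  ginv_cont : continuous ginv
}.

Definition tdlc (G : topologicalType) : Prop :=
  totally_disconnected [set: G] /\ locally_compact [set: G].

Section GroupNotions.
Context {G : topologicalType} (T : topgroup G).

Local Notation "x * y" := (gmul T x y).
Local Notation "x ^-1" := (ginv T x).

Definition is_subgroup (S : set G) : Prop :=
  S (gone T) /\ (forall x y, S x -> S y -> S (x * y)) /\
  (forall x, S x -> S (x ^-1)).

Definition generated (K : set G) : set G :=
  fun g => forall S : set G, is_subgroup S -> K `<=` S -> S g.

Definition compactly_generated : Prop :=
  exists K : set G, compact K /\ generated K = [set: G].

Definition conj_set (U : set G) (g : G) : set G :=
  [set g^-1 * u * g | u in U].

Definition rcoset (H : set G) (g : G) : set G := [set h * g | h in H].

Definition index_is (K H : set G) (n : nat) : Prop :=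
  [set rcoset H k | k in K] #= `I_n.

(* Delta(g) = |U : U cap g^-1Ug| / |g^-1Ug : U cap g^-1Ug|, computed with
   the compact open subgroup U. *)
Definition modular_value (U : set G) (g : G) (r : rat) : Prop :=
  exists m n : nat,
    index_is U (U `&` conj_set U g) m /\
    index_is (conj_set U g) (U `&` conj_set U g) n /\
    r = (m%:R / n%:R)%R.

Definition compact_open_subgroup (U : set G) : Prop :=
  is_subgroup U /\ compact U /\ open U.

End GroupNotions.

Definition simple_graph {V : Type} (E : V -> V -> Prop) : Prop :=
  (forall u v, E u v -> E v u) /\ (forall u, ~ E u u).

Definition connected_graph {V : Type} (E : V -> V -> Prop) : Prop :=
  forall u v, clos_refl_trans V E u v.

Definition locally_finite {V : Type} (E : V -> V -> Prop) : Prop :=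
  forall v, finite_set [set w | E v w].

Section Action.
Context {G : topologicalType} (T : topgroup G) {V : Type}.

Definition right_action (act : V -> G -> V) : Prop :=
  (forall v, act v (gone T) = v) /\
  (forall v g h, act v (gmul T g h) = act (act v g) h).

Definition stabilizer (act : V -> G -> V) (a : V) : set G :=
  [set g | act a g = a].

Definition orbit_under (act : V -> G -> V) (S : set G) (b : V) : set V :=
  [set act b g | g in S].

Definition cayley_abels (E : V -> V -> Prop) (act : V -> G -> V) : Prop :=
  simple_graph E /\ connected_graph E /\ locally_finite E /\
  right_action act /\
  (forall u v g, E u v <-> E (act u g) (act v g)) /\
  (forall u v, exists g, act u g = v) /\
  (forall a, compact (stabilizer act a) /\ open (stabilizer act a)).

End Action.

Definition rat_generated (n : nat) (q : 'I_n -> rat) : set rat :=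
  [set r | exists e : 'I_n -> int, r = (\prod_(i < n) (q i ^ e i))%R].

(* Main.v *)
Require Import Defs.
From HB Require Import structures.
From mathcomp Require Import all_boot all_order all_algebra.
From mathcomp Require Import all_classical all_reals all_analysis.
From mathcomp Require Import ring zify.
From Stdlib Require Import Relation_Operators Operators_Properties.
Import Order.TTheory GRing.Theory Num.Theory.


Module P1.
Local Open Scope classical_set_scope.
Local Open Scope card_scope.

Set Implicit Arguments.
Unset Strict Implicit.
Unset Printing Implicit Defensive.

Section Grp.
Variables (G : topologicalType) (T : topgroup G).
Local Notation "x *g y" := (gmul T x y) (at level 40, left associativity).
Local Notation inv := (ginv T).
Local Notation one := (gone T).

Lemma mulgA' x y z : x *g (y *g z) = x *g y *g z. Proof. exact: gmulA. Qed.
Lemma mul1g' x : one *g x = x. Proof. exact: gmul1g. Qed.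
Lemma mulg1' x : x *g one = x. Proof. exact: gmulg1. Qed.
Lemma mulVg' x : inv x *g x = one. Proof. exact: gmulVg. Qed.
Lemma mulgV' x : x *g inv x = one. Proof. exact: gmulgV. Qed.
Lemma mulKg' x y : inv x *g (x *g y) = y.
Proof. by rewrite mulgA' mulVg' mul1g'. Qed.
Lemma mulKVg' x y : x *g (inv x *g y) = y.
Proof. by rewrite mulgA' mulgV' mul1g'. Qed.
Lemma mulgK' x y : x *g y *g inv y = x.
Proof. by rewrite -mulgA' mulgV' mulg1'. Qed.
Lemma mulgKV' x y : x *g inv y *g y = x.
Proof. by rewrite -mulgA' mulVg' mulg1'. Qed.
Lemma invg_uniq x y : x *g y = one -> inv x = y.
Proof. by move=> h; rewrite -[inv x]mulg1' -h mulKg'. Qed.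
Lemma invgK' x : inv (inv x) = x.
Proof. by apply: invg_uniq; rewrite mulVg'. Qed.
Lemma invMg' x y : inv (x *g y) = inv y *g inv x.
Proof. by apply: invg_uniq; rewrite -mulgA' (mulgA' y) mulgV' mul1g' mulgV'. Qed.
Lemma invg1' : inv one = one.
Proof. by apply: invg_uniq; rewrite mul1g'. Qed.
Lemma mulg_injl x y z : x *g y = x *g z -> y = z.
Proof. by move=> h; rewrite -(mulKg' x y) h mulKg'. Qed.
Lemma mulg_injr x y z : y *g x = z *g x -> y = z.
Proof. by move=> h; rewrite -(mulgK' y x) h mulgK'. Qed.

Lemma cont_mulr c : continuous (fun x => x *g c).
Proof.
move=> x; apply: (@continuous2_cvg _ _ _ _ _ _ id (fun=> c) (gmul T) x c).
- by have := @gmul_cont _ T (x, c).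
- exact: cvg_id.
- exact: cvg_cst.
Qed.
Lemma cont_mull c : continuous (fun x => c *g x).
Proof.
move=> x; apply: (@continuous2_cvg _ _ _ _ _ _ (fun=> c) id (gmul T) c x).
- by have := @gmul_cont _ T (c, x).
- exact: cvg_cst.
- exact: cvg_id.
Qed.
Lemma cont_conj a b : continuous (fun x => a *g x *g b).
Proof.
move=> x; apply: (@continuous_comp _ _ _ (fun x => a *g x) (fun y => y *g b)).
  exact: cont_mull. exact: cont_mulr.
Qed.


Local Notation sg := (is_subgroup T).

Lemma sg1 H : sg H -> H one. Proof. by case. Qed.
Lemma sgM H x y : sg H -> H x -> H y -> H (x *g y).
Proof. by case=> _ [h _] ; apply: h. Qed.
Lemma sgV H x : sg H -> H x -> H (inv x).
Proof. by case=> _ [_ h]; apply: h. Qed.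
Lemma sgVP H x : sg H -> H (inv x) -> H x.
Proof. by move=> sH /(sgV sH); rewrite invgK'. Qed.
Lemma sgI H K : sg H -> sg K -> sg (H `&` K).
Proof.
move=> sH sK; split; first by split; apply: sg1.
split=> [x y [hx kx] [hy ky]|x [hx kx]]; split.
- exact: sgM. - exact: sgM. - exact: sgV. - exact: sgV.
Qed.
Lemma sg_sym H x y : sg H -> H (x *g inv y) -> H (y *g inv x).
Proof. by move=> sH /(sgV sH); rewrite invMg' invgK'. Qed.
Lemma sg_trans H x y z : sg H -> H (x *g inv y) -> H (y *g inv z) -> H (x *g inv z).
Proof. by move=> sH a b; have := sgM sH a b; rewrite -mulgA' mulKg'. Qed.

Lemma rcoset_eqP H x y : sg H -> rcoset T H x = rcoset T H y <-> H (x *g inv y).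
Proof.
move=> sH; split=> [E|h].
  have : rcoset T H y x by rewrite -E; exists one; [exact: sg1 | rewrite mul1g'].
  by case=> u Hu <-; rewrite mulgK'.
apply/seteqP; split=> z [u Hu <-].
  exists (u *g (x *g inv y)); first exact: sgM.
  by rewrite -mulgA' mulgKV'.
exists (u *g (y *g inv x)); first by apply: sgM => //; apply: sg_sym.
by rewrite -mulgA' mulgKV'.
Qed.

Definition reps (K H : set G) (I : finType) (f : I -> G) :=
  [/\ forall i, K (f i), forall i j, H (f i *g inv (f j)) -> i = j &
      forall k, K k -> exists i, H (k *g inv (f i))].

Lemma finT_card (I : finType) : [set: I] #= `I_#|I|.
Proof.
rewrite card_eq_sym; apply: card_eq_trans card_II _.
have -> : [set: 'I_#|I|] = enum_rank @` [set: I].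
  apply/seteqP; split=> // j _; exists (enum_val j) => //; exact: enum_valK.
apply: inj_card_eq => x y _ _; exact: enum_rank_inj.
Qed.

Lemma reps_index K H (I : finType) (f : I -> G) : sg H -> reps K H f -> index_is T K H #|I|.
Proof.
move=> sH [fK finj fcov].
have E : [set rcoset T H k | k in K] = (fun i => rcoset T H (f i)) @` [set: I].
  apply/seteqP; split=> X.
    case=> k Kk <-; have [i hi] := fcov k Kk; exists i => //.
    by apply/esym/rcoset_eqP.
  by case=> i _ <-; exists (f i).
rewrite /index_is E; apply: card_eq_trans (finT_card I).
by apply: inj_card_eq => i j _ _ /(rcoset_eqP _ _ sH) /finj.
Qed.

Lemma idx_reps K H n : sg H -> index_is T K H n -> exists f : 'I_n -> G, reps K H f.
Proof.
move=> sH; rewrite /index_is card_eq_sym => /card_set_bijP [F [Ffun Finj Fsurj]].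
have : forall i : 'I_n, exists k, K k /\ rcoset T H k = F i.
  move=> i; have := Ffun (val i) (ltn_ord i); case=> k Kk <-; by exists k.
case/choice=> r hr; exists r; split.
- by move=> i; case: (hr i).
- move=> i j /(rcoset_eqP _ _ sH) e; apply: val_inj; apply: Finj.
  + by apply/mem_set; exact: ltn_ord. + by apply/mem_set; exact: ltn_ord.
  by case: (hr i) => _ <-; case: (hr j) => _ <-.
- move=> k Kk; have : [set rcoset T H k | k in K] (rcoset T H k) by exists k.
  case/Fsurj=> m mn Fm; exists (Ordinal mn); apply/(rcoset_eqP _ _ sH).
  by case: (hr (Ordinal mn)) => _ ->.
Qed.

Lemma idx_uniq K H m n : index_is T K H m -> index_is T K H n -> m = n.
Proof.
move=> a b; apply/card_eq_II; apply: card_eq_trans b.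
by rewrite card_eq_sym.
Qed.

Lemma idx_pos K H n x : sg H -> K x -> index_is T K H n -> (0 < n)%N.
Proof.
move=> sH Kx /(idx_reps sH) [f [_ _ fc]]; have [i _] := fc x Kx.
by case: i => i /=; case: n {f fc} => // _; rewrite ltn0.
Qed.


Lemma reps_mul A B C (I J : finType) (f : I -> G) (h : J -> G) :
  sg A -> sg B -> sg C -> C `<=` B -> B `<=` A ->
  reps A B f -> reps B C h -> reps A C (fun p : J * I => h p.1 *g f p.2).
Proof.
move=> sA sB sC CB BA [fA finj fc] [hB hinj hc]; split.
- by move=> [j i] /=; apply: sgM => //; apply: BA.
- move=> [j i] [j' i'] /= hC.
  have Bfi : B (f i *g inv (f i')).
    have := CB _ hC; rewrite invMg' => e.
    have e2 := sgM sB (sgM sB (sgV sB (hB j)) e) (hB j').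
    by move: e2; rewrite !mulgA' mulVg' mul1g' mulgKV'.
  have ii := finj _ _ Bfi; subst i'.
  by move: hC; rewrite invMg' mulgA' mulgK' => /hinj ->.
- move=> k Ak; have [i Bi] := fc k Ak; have [j Cj] := hc _ Bi.
  exists (j, i) => /=; by rewrite invMg' mulgA'.
Qed.

Lemma idx_mul A B C m n : sg A -> sg B -> sg C -> C `<=` B -> B `<=` A ->
  index_is T A B m -> index_is T B C n -> index_is T A C (n * m).
Proof.
move=> sA sB sC CB BA /(idx_reps sB) [f rf] /(idx_reps sC) [h rh].
have := reps_index sC (reps_mul sA sB sC CB BA rf rh).
by rewrite card_prod !card_ord.
Qed.

Lemma idx_sub K K' H n : K' `<=` K -> index_is T K H n -> exists m, index_is T K' H m.
Proof.
move=> KK' hn; have : finite_set [set rcoset T H k | k in K] by exists n.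
apply: sub_finite_set => X [k Kk <-]; exists k => //; exact: KK'.
Qed.

Lemma conj_setP U g x : conj_set T U g x <-> U (g *g x *g inv g).
Proof.
split=> [[u Uu <-]|h]; first by rewrite !mulgA' [g *g inv g]mulgV' mul1g' mulgK'.
by exists (g *g x *g inv g) => //; rewrite !mulgA' [inv g *g g]mulVg' mul1g' mulgKV'.
Qed.

Lemma conj_setE U g : conj_set T U g = (fun x => g *g x *g inv g) @^-1` U.
Proof. by apply/seteqP; split=> x /conj_setP. Qed.

Lemma conj_setM U g h : conj_set T (conj_set T U g) h = conj_set T U (g *g h).
Proof.
apply/seteqP; split=> x.
  move/conj_setP/conj_setP => e; apply/conj_setP.
  by move: e; rewrite invMg' !mulgA'.
move/conj_setP => e; apply/conj_setP; apply/conj_setP.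
by move: e; rewrite invMg' !mulgA'.
Qed.


Lemma cjM a x y : inv a *g (x *g y) *g a = (inv a *g x *g a) *g (inv a *g y *g a).
Proof. by rewrite !mulgA' mulgK'. Qed.
Lemma cjV a x : inv (inv a *g x *g a) = inv a *g inv x *g a.
Proof. by rewrite !invMg' invgK' !mulgA'. Qed.
Lemma cjK a x : a *g (inv a *g x *g a) *g inv a = x.
Proof. by rewrite !mulgA' [a *g inv a]mulgV' mul1g' mulgK'. Qed.
Lemma cjM' a x y : a *g (x *g y) *g inv a = (a *g x *g inv a) *g (a *g y *g inv a).
Proof. by have := cjM (inv a) x y; rewrite invgK'. Qed.
Lemma cjV' a x : inv (a *g x *g inv a) = a *g inv x *g inv a.
Proof. by have := cjV (inv a) x; rewrite invgK'. Qed.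
Lemma cjK' a x : inv a *g (a *g x *g inv a) *g a = x.
Proof. by have := cjK (inv a) x; rewrite invgK'. Qed.

Lemma sg_conj U g : sg U -> sg (conj_set T U g).
Proof.
move=> sU; split.
  by apply/conj_setP; rewrite mulg1' mulgV'; apply: sg1.
split=> [x y /conj_setP hx /conj_setP hy|x /conj_setP hx]; apply/conj_setP.
  by rewrite cjM'; apply: sgM.
by rewrite -cjV'; apply: sgV.
Qed.

Lemma conj_setI U V g : conj_set T (U `&` V) g = conj_set T U g `&` conj_set T V g.
Proof.
apply/seteqP; split=> x.
  by move/conj_setP => [a b]; split; apply/conj_setP.
by move=> [/conj_setP a /conj_setP b]; apply/conj_setP.
Qed.

Lemma conj_set1 U : conj_set T U one = U.
Proof.
apply/seteqP; split=> x.
  by move/conj_setP; rewrite mul1g' invg1' mulg1'.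
by move=> h; apply/conj_setP; rewrite mul1g' invg1' mulg1'.
Qed.

Lemma conj_set_in U s : sg U -> U s -> conj_set T U s = U.
Proof.
move=> sU Us; apply/seteqP; split=> x.
  move/conj_setP => h; have := sgM sU (sgM sU (sgV sU Us) h) Us.
  by rewrite !mulgA' [inv s *g s]mulVg' mul1g' mulgKV'.
move=> h; apply/conj_setP; apply: sgM => //; first apply: sgM => //.
exact: sgV.
Qed.

Lemma reps_conj A B (I : finType) (f : I -> G) g : sg B -> reps A B f ->
  reps (conj_set T A g) (conj_set T B g) (fun i => inv g *g f i *g g).
Proof.
move=> sB [fA finj fc]; split.
- by move=> i; apply/conj_setP; rewrite cjK.
- move=> i j /conj_setP; rewrite cjV -cjM cjK; exact: finj.
- move=> k /conj_setP /fc [i hi]; exists i; apply/conj_setP.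
  by rewrite cjV cjM' cjK.
Qed.

Lemma idx_conj A B n g : sg B -> index_is T A B n ->
  index_is T (conj_set T A g) (conj_set T B g) n.
Proof.
move=> sB /(idx_reps sB) [f rf].
have := reps_index (sg_conj g sB) (reps_conj g sB rf).
by rewrite card_ord.
Qed.

Lemma cover_compactG (A : set G) : compact A -> cover_compact A.
Proof.
move=> cA.
pose G' : ptopologicalType := HB.pack G (isPointed.Build G one).
have h := @compact_cover G'.
exact: (eq_ind _ (fun P => P A) cA _ h).
Qed.


Lemma idx_fin U V : sg U -> sg V -> compact U -> open V ->
  exists n, index_is T U (U `&` V) n.
Proof.
move=> sU sV cU oV.
have cc := cover_compactG cU.
have [D' D'U cov] : finite_subset_cover U (fun u => (fun x => x *g inv u) @^-1` V) U.
  apply: (cc G).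

  - by move=> u _; apply: (proj1 (continuousP _) (@cont_mulr (inv u))).
  - move=> k Uk; exists k => //=; rewrite mulgV'; exact: sg1.
have : finite_set [set rcoset T (U `&` V) k | k in U].
  apply: (sub_finite_set _ (finite_image (fun u => rcoset T (U `&` V) u)
     (finite_fset D'))).
  move=> X [k Uk <-]; have [u D'u Vku] := cov k Uk.
  have Uu : U u by have := D'U u D'u; rewrite inE.
  exists u => //; apply/(rcoset_eqP _ _ (sgI sU sV)); apply: (sg_sym (sgI sU sV)).
  split => //; apply: sgM => //; exact: sgV.
by [].
Qed.


End Grp.

End P1.
Import P1.


Module P2.
Local Open Scope classical_set_scope.
Local Open Scope card_scope.

Set Implicit Arguments.
Unset Strict Implicit.
Unset Printing Implicit Defensive.

Section Ix.
Variables (G : topologicalType) (T : topgroup G).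
Local Notation "x *g y" := (gmul T x y) (at level 40, left associativity).
Local Notation inv := (ginv T).
Local Notation one := (gone T).
Local Notation sg := (is_subgroup T).
Local Notation cos := (compact_open_subgroup T).

Definition ix (A B : set G) (r : rat) := exists m n : nat,
  index_is T A (A `&` B) m /\ index_is T B (A `&` B) n /\ r = (m%:R / n%:R)%R.

Lemma cos_sg U : cos U -> sg U. Proof. by case. Qed.
Lemma cos_compact U : cos U -> compact U. Proof. by case=> _ []. Qed.
Lemma cos_open U : cos U -> open U. Proof. by case=> _ []. Qed.

Lemma ix_ex A B : cos A -> cos B -> exists r, ix A B r.
Proof.
move=> cA cB.
have [m hm] := idx_fin (cos_sg cA) (cos_sg cB) (cos_compact cA) (cos_open cB).
have [n hn] := idx_fin (cos_sg cB) (cos_sg cA) (cos_compact cB) (cos_open cA).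
by exists (m%:R / n%:R)%R, m, n; rewrite setIC in hn.
Qed.

Lemma ix_D A B D p q r : sg A -> sg B -> sg D -> D `<=` A `&` B ->
  index_is T A D p -> index_is T B D q -> ix A B r -> r = (p%:R / q%:R)%R.
Proof.
move=> sA sB sD DAB hp hq [m [n [hm [hn ->]]]].
have [k hk] := idx_sub (@subIsetl _ A B) hp.
have sAB := sgI sA sB.
have p_eq := idx_uniq hp (idx_mul sA sAB sD DAB (@subIsetl _ A B) hm hk).
have q_eq := idx_uniq hq (idx_mul sB sAB sD DAB (@subIsetr _ A B) hn hk).
have k0 := idx_pos sD (sg1 sAB) hk.
have n0 := idx_pos sAB (sg1 sB) hn.
rewrite p_eq q_eq !natrM.
have kR : (k%:R : rat) != 0%R by rewrite pnatr_eq0 -lt0n.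
have nR : (n%:R : rat) != 0%R by rewrite pnatr_eq0 -lt0n.
by rewrite -mulf_div divff // mul1r.
Qed.


Lemma ix_uniq A B r r' : ix A B r -> ix A B r' -> r = r'.
Proof.
move=> [m [n [hm [hn ->]]]] [m' [n' [hm' [hn' ->]]]].
by rewrite (idx_uniq hm hm') (idx_uniq hn hn').
Qed.

Lemma cocycle A B C r1 r2 r3 : cos A -> cos B -> cos C ->
  ix A B r1 -> ix B C r2 -> ix A C r3 -> r3 = (r1 * r2)%R.
Proof.
move=> cA cB cC h1 h2 h3.
have sA := cos_sg cA; have sB := cos_sg cB; have sC := cos_sg cC.
pose D := A `&` (B `&` C).
have sD : sg D by apply: sgI => //; apply: sgI.
have [p hp] := idx_fin sA (sgI sB sC) (cos_compact cA) (openI (cos_open cB) (cos_open cC)).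
have [q hq] := idx_fin sB (sgI sA sC) (cos_compact cB) (openI (cos_open cA) (cos_open cC)).
have [s hs] := idx_fin sC (sgI sA sB) (cos_compact cC) (openI (cos_open cA) (cos_open cB)).
have eB : B `&` (A `&` C) = D by rewrite /D setICA.
have eC : C `&` (A `&` B) = D by rewrite /D setIC -setIA.
rewrite eB in hq; rewrite eC in hs.
have DAB : D `<=` A `&` B by move=> x [? [? ?]].
have DBC : D `<=` B `&` C by move=> x [? [? ?]].
have DAC : D `<=` A `&` C by move=> x [? [? ?]].
rewrite (ix_D sA sB sD DAB hp hq h1) (ix_D sB sC sD DBC hq hs h2).
rewrite (ix_D sA sC sD DAC hp hs h3).
have q0 := idx_pos sD (sg1 sB) hq.
have qR : (q%:R : rat) != 0%R by rewrite pnatr_eq0 -lt0n.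
by rewrite mulf_div [(q%:R * s%:R)%R]mulrC -mulf_div divff // mulr1.
Qed.

Lemma ix_conj A B g r : sg A -> sg B -> ix A B r ->
  ix (conj_set T A g) (conj_set T B g) r.
Proof.
move=> sA sB [m [n [hm [hn ->]]]]; exists m, n; rewrite -conj_setI.
split; first exact: idx_conj (sgI sA sB) hm.
by split=> //; exact: idx_conj (sgI sA sB) hn.
Qed.

Lemma idx_refl A : sg A -> index_is T A A 1.
Proof.
move=> sA.
have r : reps T A A (fun _ : 'I_1 => one).
  split=> //; first by move=> _; exact: sg1.
  - by move=> i j _; apply: val_inj; case: i => [[]] //; case: j => [[]].
  - by move=> k Ak; exists ord0; rewrite invg1' mulg1'.
by have := reps_index sA r; rewrite card_ord.
Qed.


Lemma ix_one A : sg A -> ix A A 1%R.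
Proof.
move=> sA; exists 1%N, 1%N; rewrite setIid; split; first exact: idx_refl.
by split; [exact: idx_refl | rewrite divr1].
Qed.

Lemma cos_conj U g : cos U -> cos (conj_set T U g).
Proof.
move=> [sU [cU oU]]; split; first exact: sg_conj.
split.
  apply: continuous_compact => //; apply: continuous_subspaceT.
  exact: cont_conj.
rewrite conj_setE; apply: (proj1 (continuousP _)) => //.
exact: cont_conj.
Qed.

Lemma ix_indep U V g r s : cos U -> cos V ->
  ix U (conj_set T U g) r -> ix V (conj_set T V g) s -> r = s.
Proof.
move=> cU cV hr hs.
have cUg := cos_conj g cU; have cVg := cos_conj g cV.
have [a ha] := ix_ex cV cU; have [b hb] := ix_ex cU cV.
have [c hc] := ix_ex cV cUg.
have hd := ix_conj g (cos_sg cU) (cos_sg cV) hb.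
have e1 := cocycle cV cU cUg ha hr hc.
have e2 := cocycle cV cUg cVg hc hd hs.
have e3 := cocycle cV cU cV ha hb (ix_one (cos_sg cV)).
by rewrite e2 e1 mulrAC -e3 mul1r.
Qed.

Lemma ix_mul U g h r1 r2 r3 : cos U -> ix U (conj_set T U g) r1 ->
  ix U (conj_set T U h) r2 -> ix U (conj_set T U (g *g h)) r3 -> r3 = (r2 * r1)%R.
Proof.
move=> cU h1 h2 h3.
have := ix_conj h (cos_sg cU) (cos_sg (cos_conj g cU)) h1.
rewrite conj_setM => h4.
exact: cocycle cU (cos_conj h cU) (cos_conj (g *g h) cU) h2 h4 h3.
Qed.

End Ix.

End P2.
Import P2.


Module P3.
Local Open Scope classical_set_scope.
Local Open Scope card_scope.

Set Implicit Arguments.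
Unset Strict Implicit.
Unset Printing Implicit Defensive.

Section Act.
Variables (G : topologicalType) (T : topgroup G) (V : Type) (act : V -> G -> V).
Hypothesis ra : right_action T act.
Local Notation "x *g y" := (gmul T x y) (at level 40, left associativity).
Local Notation inv := (ginv T).
Local Notation one := (gone T).
Local Notation sg := (is_subgroup T).
Local Notation stab := (stabilizer act).

Lemma act1 v : act v one = v. Proof. by case: ra. Qed.
Lemma actM v g h : act v (g *g h) = act (act v g) h. Proof. by case: ra. Qed.
Lemma actK v g : act (act v g) (inv g) = v.
Proof. by rewrite -actM mulgV' act1. Qed.
Lemma actKV v g : act (act v (inv g)) g = v.
Proof. by rewrite -actM mulVg' act1. Qed.

Lemma stab_sg a : sg (stab a).
Proof.
split; first exact: act1.
split=> [x y hx hy|x hx]; rewrite /stabilizer /=.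
  by rewrite actM hx hy.
by rewrite -{1}hx actK.
Qed.

Lemma act_eq a x y : act a x = act a y -> stab a (x *g inv y).
Proof. by move=> e; rewrite /stabilizer /= actM e actK. Qed.

Lemma stab_conj a g : conj_set T (stab a) g = stab (act a g).
Proof.
apply/seteqP; split=> x.
  move/conj_setP; rewrite /stabilizer /= => e.
  by rewrite -{2}e !actM actKV.
rewrite /stabilizer /= => e; apply/conj_setP; rewrite /stabilizer /=.
by rewrite !actM e actK.
Qed.

Lemma orbit_card W v n : sg W -> index_is T W (W `&` stab v) n ->
  orbit_under act W v #= `I_n.
Proof.
move=> sW /(idx_reps (sgI sW (stab_sg v))) [f [fW finj fc]].
have -> : orbit_under act W v = (fun i => act v (f i)) @` [set: 'I_n].
  apply/seteqP; split=> x.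
    case=> w Ww <-; have [i [_ hi]] := fc w Ww; exists i => //.
    by rewrite -(mulgKV' T w (f i)) actM hi.
  by case=> i _ <-; exists (f i).
apply: card_eq_trans; first apply: inj_card_eq.
  move=> i j _ _ /act_eq h; apply: finj; split => //.
  by apply: sgM => //; apply: sgV.
by have := finT_card 'I_n; rewrite card_ord.
Qed.

End Act.

End P3.
Import P3.


Module P4.
Local Open Scope classical_set_scope.
Local Open Scope ring_scope.

Set Implicit Arguments.
Unset Strict Implicit.
Unset Printing Implicit Defensive.

Section RG.
Variables (n : nat) (q : 'I_n -> rat).
Hypothesis q0 : forall i, q i != 0.

Lemma rg_one : rat_generated q 1.
Proof. by exists (fun=> 0); rewrite big1 // => i _; rewrite expr0z. Qed.

Lemma rg_mul x y : rat_generated q x -> rat_generated q y -> rat_generated q (x * y).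
Proof.
move=> [e ->] [f ->]; exists (fun i => e i + f i).
by rewrite -big_split /=; apply: eq_bigr => i _; rewrite expfzDr.
Qed.

Lemma rg_inv x : rat_generated q x -> rat_generated q x^-1.
Proof.
move=> [e ->]; exists (fun i => - e i).
by rewrite -prodfV; apply: eq_bigr => i _; rewrite invr_expz.
Qed.

Lemma rg_gen i : rat_generated q (q i).
Proof.
exists (fun j => (j == i)%:Z); rewrite (bigD1 i) //= eqxx expr1z big1 ?mulr1 //.
by move=> j /negbTE ->; rewrite expr0z.
Qed.

Lemma rg_min (S : set rat) : S 1 -> (forall x y, S x -> S y -> S (x * y)) ->
  (forall x, S x -> S x^-1) -> (forall i, S (q i)) ->
  rat_generated q `<=` S.
Proof.
move=> S1 SM SV Sq x [e ->].
apply: (big_ind S) => // i _.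
case: (e i) => k.
  elim: k => [|k IH]; first by rewrite expr0z.
  by rewrite exprSzr; apply: SM.
rewrite NegzE -invr_expz; apply: SV.
elim: k => [|k IH]; first by rewrite expr1z.
by rewrite exprSzr; apply: SM.
Qed.

End RG.

End P4.
Import P4.


Module P5.
Local Open Scope classical_set_scope.
Local Open Scope ring_scope.

Set Implicit Arguments.
Unset Strict Implicit.
Unset Printing Implicit Defensive.

Definition vN (x : rat) : nat := `|numq x|%N.
Definition vD (x : rat) : nat := `|denq x|%N.
Definition val_p (p : nat) (x : rat) : int := (logn p (vN x))%:Z - (logn p (vD x))%:Z.

Lemma vD_gt0 x : (0 < vD x)%N.
Proof. by rewrite /vD absz_gt0 gt_eqF // denq_gt0. Qed.

Lemma vN_gt0 x : 0 < x -> (0 < vN x)%N.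
Proof. by move=> x0; rewrite /vN absz_gt0 gt_eqF // numq_gt0. Qed.

Lemma ratND x : 0 < x -> x = (vN x)%:R / (vD x)%:R.
Proof.
move=> x0.
have n0 : (0 : int) <= numq x by rewrite ltW // numq_gt0.
have d0 : (0 : int) <= denq x by exact/ltW/denq_gt0.
by rewrite /vN /vD !natr_absz !ger0_norm // divq_num_den.
Qed.

Lemma vP p a b : (0 < a)%N -> (0 < b)%N ->
  val_p p (a%:R / b%:R) = (logn p a)%:Z - (logn p b)%:Z.
Proof.
move=> a0 b0.
set x := a%:R / b%:R.
have x0 : 0 < x by rewrite divr_gt0 // ltr0n.
have e := ratND x0.
have : (a * vD x = vN x * b)%N.
  apply/eqP; rewrite -(eqr_nat rat) !natrM.
  have := e; rewrite {1}/x => /eqP; rewrite eqr_div ?pnatr_eq0 -?lt0n ?vD_gt0 //.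
move/(congr1 (logn p)); rewrite !lognM ?vD_gt0 ?vN_gt0 // => h.
rewrite /val_p; lia.
Qed.

Lemma val_mul p x y : 0 < x -> 0 < y -> val_p p (x * y) = val_p p x + val_p p y.
Proof.
move=> x0 y0; rewrite {1}(ratND x0) {1}(ratND y0) mulf_div -!natrM.
rewrite vP ?muln_gt0 ?vN_gt0 ?vD_gt0 // !lognM ?vN_gt0 ?vD_gt0 //.
rewrite /val_p !PoszD; lia.
Qed.

Lemma val_one p : val_p p 1 = 0.
Proof. by have := vP p (ltnSn 0) (ltnSn 0); rewrite divr1 subrr. Qed.

Lemma val_inv p x : 0 < x -> val_p p x^-1 = - val_p p x.
Proof.
move=> x0; have := val_mul p x0 (_ : 0 < x^-1); rewrite invr_gt0 => /(_ x0).
rewrite mulfV ?gt_eqF // val_one => h.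
by apply/eqP; rewrite -subr_eq0 opprK addrC -h.
Qed.

Lemma val_pow p x (e : int) : 0 < x -> val_p p (x ^ e) = e * val_p p x.
Proof.
move=> x0; have hn (k : nat) : val_p p (x ^ k) = k%:Z * val_p p x.
  elim: k => [|k IH]; first by rewrite expr0z val_one mul0r.
  by rewrite exprSzr val_mul ?exprz_gt0 // IH -{2}(add0n k) -addn1 PoszD mulrDl mul1r.
case: e => k; first exact: hn.
by rewrite NegzE -invr_expz val_inv ?exprz_gt0 // hn mulNr.
Qed.

Lemma val_prod p k (c : 'I_k -> rat) (e : 'I_k -> int) : (forall j, 0 < c j) ->
  val_p p (\prod_j c j ^ e j) = \sum_j e j * val_p p (c j).
Proof.
move=> c0.
suff : 0 < \prod_j c j ^ e j /\ val_p p (\prod_j c j ^ e j) = \sum_j e j * val_p p (c j).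
  by case.
apply: (@big_ind2 rat int (fun a b => 0 < a /\ val_p p a = b) 1 *%R 0 +%R).
- by split; [exact: ltr01 | exact: val_one].
- move=> a1 b1 a2 b2 [h1 <-] [h2 <-]; split; first exact: mulr_gt0.
  exact: val_mul.
- move=> j _; split; first exact: exprz_gt0.
  exact: val_pow.
Qed.

Lemma val_eq1 x : 0 < x -> (forall p, prime p -> val_p p x = 0) -> x = 1.
Proof.
move=> x0 h.
have e : vN x = vD x.
  apply: (@eqn_from_log (vN x) (vD x) (vN_gt0 x0) (vD_gt0 x)) => p.
  have [pp|pp] := boolP (prime p).
    by apply/eqP; rewrite -eqz_nat -subr_eq0; apply/eqP; exact: h.
  by rewrite (lognE p (vN x)) (lognE p (vD x)) (negbTE pp).
have := coprime_num_den x; rewrite -/(vN x) -/(vD x) -e /coprime gcdnn => /eqP e1.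
by rewrite (ratND x0) -e e1 divr1.
Qed.

End P5.
Import P5.


Module P6.
Local Open Scope classical_set_scope.
Local Open Scope ring_scope.

Set Implicit Arguments.
Unset Strict Implicit.
Unset Printing Implicit Defensive.

Definition grp (H : set rat) := [/\ H 1, (forall x y, H x -> H y -> H (x * y)),
  (forall x, H x -> H x^-1) & (forall x, H x -> 0 < x)].
Definition supp_in (S : seq nat) (H : set rat) :=
  forall x p, H x -> prime p -> p \notin S -> val_p p x = 0.
Definition indep k (c : 'I_k -> rat) :=
  forall e : 'I_k -> int, \prod_j c j ^ e j = 1 -> forall j, e j = 0.

Definition basis_of (H : set rat) k (c : 'I_k -> rat) :=
  [/\ (forall j, 0 < c j), (forall j, H (c j)), indep c &
      (forall x, H x -> exists e : 'I_k -> int, x = \prod_j c j ^ e j)].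

Lemma free_nil H : grp H -> supp_in [::] H -> exists k (c : 'I_k -> rat), basis_of H c.
Proof.
move=> [H1 HM HV Hpos] hs; exists 0%N, (fun=> 1); split.
- by move=> [].
- by move=> [].
- by move=> e _ [].
- move=> x Hx; exists (fun=> 0); rewrite big_ord0.
  by apply: val_eq1 (Hpos _ Hx) _ => p pp; exact: hs.
Qed.

Lemma grp_pow H x (e : int) : grp H -> H x -> H (x ^ e).
Proof.
move=> [H1 HM HV _] Hx.
have hn (k : nat) : H (x ^ k).
  elim: k => [|k IH]; first by rewrite expr0z.
  by rewrite exprSzr; apply: HM.
case: e => k; first exact: hn.
by rewrite NegzE -invr_expz; apply: HV.
Qed.

Lemma free_cons p S H : grp H -> supp_in (p :: S) H ->
  (forall H', grp H' -> supp_in S H' -> exists k (c : 'I_k -> rat), basis_of H' c) ->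
  exists k (c : 'I_k -> rat), basis_of H c.
Proof.
move=> gH hs IH; have [H1 HM HV Hpos] := gH.
pose H' := [set x | H x /\ val_p p x = 0].
have gH' : grp H'.
  split.
  - by split=> //; exact: val_one.
  - move=> x y [hx vx] [hy vy]; split; first exact: HM.
    by rewrite val_mul ?Hpos // vx vy addr0.
  - move=> x [hx vx]; split; first exact: HV.
    by rewrite val_inv ?Hpos // vx oppr0.
  - by move=> x [hx _]; exact: Hpos.
have sH' : supp_in S H'.
  move=> x p' [hx vx] pp' nS.
  have [->|ne] := eqVneq p' p; first exact: vx.
  by apply: hs => //; rewrite in_cons negb_or ne.
have [k [c' [c'pos c'H c'ind c'rep]]] := IH H' gH' sH'.
have [nz|allz] := pselect (exists x, H x /\ val_p p x != 0); last first.
  exists k, c'; split=> //.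
  - by move=> j; case: (c'H j).
  - move=> x Hx; apply: c'rep; split=> //.
    apply/eqP; apply/negPn/negP => ne; apply: allz; by exists x.
have [y [Hy vy]] : exists y, H y /\ 0 < val_p p y.
  case: nz => x [Hx nx].
  case: (ltrP 0 (val_p p x)) => h; first by exists x.
  exists x^-1; split; first exact: HV.
  by rewrite val_inv ?Hpos // oppr_gt0 lt_neqAle nx h.
pose P := fun m : nat => `[< exists x, H x /\ val_p p x = m.+1%:Z >].
have exP : exists m, P m.
  exists (`|val_p p y|%N.-1); apply/asboolP; exists y; split=> //.
  move: vy; set z := val_p p y; lia.
case: (ex_minnP exP) => m /asboolP [h0 [Hh0 vh0]] hmin.
pose c := fun j : 'I_k.+1 => if unlift ord0 j is Some j' then c' j' else h0.
have cE e : \prod_(j < k.+1) c j ^ e j = h0 ^ e ord0 * \prod_(j < k) c' j ^ e (lift ord0 j).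
  by rewrite big_ord_recl /c unlift_none; congr (_ * _); apply: eq_bigr => j _; rewrite liftK.
have h0pos := Hpos _ Hh0.
exists k.+1, c; split.
- by move=> j; rewrite /c; case: (unlift ord0 j) => [j'|].
- by move=> j; rewrite /c; case: (unlift ord0 j) => [j'|] //; case: (c'H j').
- move=> e; rewrite cE => E.
  have P'pos : 0 < \prod_(j < k) c' j ^ e (lift ord0 j).
    by apply: prodr_gt0 => j _; apply: exprz_gt0.
  have v0 := congr1 (val_p p) E.
  have h0e : 0 < h0 ^ e ord0 by apply: exprz_gt0.
  rewrite val_one (val_mul p h0e P'pos) (val_pow _ _ h0pos) val_prod // big1 ?addr0 in v0;
    last by move=> j _; case: (c'H j) => _ ->; rewrite mulr0.
  have e0 : e ord0 = 0.
    by move/eqP: v0; rewrite mulf_eq0 vh0 orbF => /eqP.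
  rewrite e0 expr0z mul1r in E.
  have ind := c'ind _ E.
  by move=> j; case: (unliftP ord0 j) => [j'|] ->.
- move=> x Hx; set z := val_p p x.
  set d : int := m.+1%:Z.
  have dnz : d != 0 by [].
  set t := (z %/ d)%Z.
  set y' := x * h0 ^ (- t).
  have Hy' : H y' by apply: HM => //; apply: grp_pow.
  have vy' : val_p p y' = (z %% d)%Z.
    have h0t : 0 < h0 ^ (- t) by apply: exprz_gt0.
    rewrite /y' (val_mul p (Hpos _ Hx) h0t) (val_pow _ _ h0pos) vh0 -/d -/z.
    have := divz_eq z d; rewrite -/t; nia.
  have r0 : (z %% d)%Z = 0.
    have ge := modz_ge0 z dnz; have lt := ltz_mod z dnz.
    apply/eqP; apply: contraT => rne.
    have : P (`|(z %% d)%Z|%N.-1).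
      apply/asboolP; exists y'; split => //; rewrite vy'.
      move: ge rne; set r := (z %% d)%Z; lia.
    move/hmin; move: lt ge rne; rewrite /d; set r := (z %% d)%Z; lia.
  have [e' ye'] := c'rep y' (conj Hy' (etrans vy' r0)).
  exists (fun j => if unlift ord0 j is Some j' then e' j' else t).
  rewrite big_ord_recl /c /= unlift_none.
  under eq_bigr do rewrite liftK.
  rewrite -ye' /y' -invr_expz mulrCA mulfV ?mulr1 //.
  by rewrite expfz_neq0 // gt_eqF.
Qed.

Lemma free_ex S : forall H, grp H -> supp_in S H -> exists k (c : 'I_k -> rat), basis_of H c.
Proof.
elim: S => [|p S IH] H gH hs; first exact: free_nil.
exact: free_cons gH hs IH.
Qed.

Lemma val_small p x : 0 < x -> prime p -> (vN x < p)%N -> (vD x < p)%N -> val_p p x = 0.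
Proof.
move=> x0 pp hN hD.
have l0 m : (0 < m)%N -> (m < p)%N -> logn p m = 0%N.
  move=> m0 mp; rewrite lognE pp m0 /=.
  case: ifP => // pd; have := dvdn_leq m0 pd; rewrite leqNgt mp.
  by [].
by rewrite /val_p (l0 _ (vN_gt0 x0) hN) (l0 _ (vD_gt0 x) hD) subrr.
Qed.

Lemma free_rg n (q : 'I_n -> rat) : (forall i, 0 < q i) ->
  exists k (c : 'I_k -> rat), [/\ (forall j, 0 < c j), indep c &
     rat_generated q = rat_generated c].
Proof.
move=> qpos; have q0 i : q i != 0 by rewrite gt_eqF.
pose H := rat_generated q.
have gH : grp H.
  split.
  - exact: rg_one.
  - by move=> x y; apply: rg_mul.
  - by move=> x; apply: rg_inv.
  - by move=> x [e ->]; apply: prodr_gt0 => i _; apply: exprz_gt0.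
pose M := (\prod_i (vN (q i) * vD (q i)))%N.
have M0 : (0 < M)%N.
  by apply: prodn_gt0 => i; rewrite muln_gt0 vN_gt0 ?vD_gt0.
have dM i : (vN (q i) * vD (q i) %| M)%N.
  by rewrite /M (bigD1 i) //=; apply: dvdn_mulr.
have hs : supp_in (iota 0 M.+1) H.
  move=> x p [e ->] pp; rewrite mem_iota /= add0n ltnS -ltnNge => Mp.
  rewrite val_prod // big1 // => i _.
  rewrite (val_small (qpos i) pp) ?mulr0 //.
    apply: leq_ltn_trans Mp; apply: dvdn_leq M0 _.
    exact: dvdn_trans (dvdn_mulr _ (dvdnn _)) (dM i).
  apply: leq_ltn_trans Mp; apply: dvdn_leq M0 _.
  exact: dvdn_trans (dvdn_mull _ (dvdnn _)) (dM i).
have [k [c [cpos cH cind crep]]] := free_ex gH hs.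
exists k, c; split=> //.
have [H1 HM HV _] := gH.
apply/seteqP; split; first exact: crep.
exact: rg_min.
Qed.

End P6.
Import P6.


Unset Implicit Arguments.
Set Strict Implicit.
Set Printing Implicit Defensive.
Local Open Scope classical_set_scope.
Local Open Scope card_scope.
Local Open Scope ring_scope.

Theorem corollary4p3 (G : topologicalType) (T : topgroup G)
  (V : Type) (E : V -> V -> Prop) (act : V -> G -> V)
  (alpha : V) (n : nat) (B : 'I_n -> set V) (g : 'I_n -> G) :
  tdlc G -> compactly_generated T ->
  cayley_abels T E act ->
  (* B_1, ..., B_n are the orbits of G_alpha on Gamma(alpha), listed
     without repetition *)
  (forall i, exists beta, E alpha beta /\
       B i = orbit_under act (stabilizer act alpha) beta) ->
  injective B ->
  (forall beta, E alpha beta -> exists i, B i beta) ->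
  (forall i, B i (act alpha (g i))) ->
  exists a b : 'I_n -> nat,
    (forall i, orbit_under act (stabilizer act alpha) (act alpha (g i))
                 #= `I_(a i)) /\
    (forall i, orbit_under act (stabilizer act alpha)
                 (act alpha (ginv T (g i))) #= `I_(b i)) /\
    (forall U : set G, compact_open_subgroup T U ->
       [set r | exists h : G, modular_value T U h r]
       = rat_generated (fun i => (a i)%:R / (b i)%:R)) /\
    (exists (k : nat) (c : 'I_k -> rat),
       (forall j, 0 < c j) /\
       (forall e : 'I_k -> int, \prod_(j < k) (c j ^ e j) = 1 ->
          forall j, e j = 0) /\
       rat_generated (fun i => (a i)%:R / (b i)%:R) = rat_generated c).
Proof.
move=> _ _ [sE [conE [lfE [ra [Einv [trans stabco]]]]]] Bdef Binj Bcov gB.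
set W := stabilizer act alpha.
have sW : is_subgroup T W := stab_sg ra alpha.
have cW : compact_open_subgroup T W by split=> //; exact: stabco.
have [a ha] := choice (fun i => idx_fin sW (sg_conj (g i) sW) (cos_compact cW)
   (cos_open (cos_conj (g i) cW))).
have [b hb] := choice (fun i => idx_fin (sg_conj (g i) sW) sW
   (cos_compact (cos_conj (g i) cW)) (cos_open cW)).
exists a, b; split.
  move=> i; apply: (orbit_card ra sW); rewrite -(stab_conj ra); exact: ha.
split.
  move=> i; apply: (orbit_card ra sW).
  move: (idx_conj (ginv T (g i)) (sgI (sg_conj (g i) sW) sW) (hb i)).
  by rewrite conj_setI !conj_setM mulgV' conj_set1 (stab_conj ra) setIC.
pose q := fun i => ((a i)%:R / (b i)%:R : rat).
have [dv hdv] := choice (fun h => ix_ex cW (cos_conj h cW)).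
have dvM x y : dv (gmul T x y) = dv y * dv x.
  exact: ix_mul cW (hdv x) (hdv y) (hdv (gmul T x y)).
have dvW s : W s -> dv s = 1.
  move=> Ws; have := hdv s; rewrite conj_set_in // => h.
  exact: ix_uniq h (ix_one sW).
have ixq i : ix T W (conj_set T W (g i)) (q i).
  by exists (a i), (b i); split; [exact: ha | split; [rewrite setIC; exact: hb|]].
have dvq i : dv (g i) = q i by exact: ix_uniq (hdv (g i)) (ixq i).
have dvpos h : 0 < dv h.
  have [m [n' [hm [hn ->]]]] := hdv h.
  have m0 := idx_pos (sgI sW (sg_conj h sW)) (sg1 sW) hm.
  have n0 := idx_pos (sgI sW (sg_conj h sW)) (sg1 (sg_conj h sW)) hn.
  by rewrite divr_gt0 // ltr0n.
have qpos i : 0 < q i by rewrite -dvq.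
have dvV x : dv (ginv T x) = (dv x)^-1.
  have h := dvM x (ginv T x); rewrite mulgV' (dvW _ (sg1 sW)) in h.
  have nz : dv x != 0 by rewrite gt_eqF.
  by rewrite -[LHS]mulr1 -(mulfV nz) mulrA -h mul1r.
have q0 i : q i != 0 by rewrite gt_eqF.
have key : forall v, clos_refl_trans_n1 V E alpha v ->
    forall h, act alpha h = v -> rat_generated q (dv h).
  move=> v; elim=> [|u w Euw _ IH] h ah.
    by rewrite dvW //; exact: rg_one.
  have [h0 ah0] := trans alpha u.
  have := (proj1 (Einv u w (ginv T h0))) Euw.
  rewrite -ah0 -ah (actK ra) -(actM ra).
  set beta := act alpha _ => Eab.
  have [i Bi] := Bcov _ Eab.
  have [beta0 [_ Bi0]] := Bdef i.
  have := gB i; rewrite Bi0 => -[s2 Ws2 e2].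
  move: Bi; rewrite Bi0 => -[s1 Ws1 e1].
  have e3 : beta = act alpha (gmul T (g i) (gmul T (ginv T s2) s1)).
    by rewrite !(actM ra) -e2 (actK ra) e1.
  have Wt : W (gmul T (ginv T s2) s1) by apply: sgM => //; exact: sgV.
  have Ww := act_eq ra e3.
  set w0 := gmul T _ (ginv T _) in Ww.
  have hE : h = gmul T (gmul T w0 (gmul T (g i) (gmul T (ginv T s2) s1))) h0.
    by rewrite /w0 mulgKV' mulgKV'.
  rewrite hE (dvM _ h0) (dvM w0) (dvM (g i)) (dvW _ Wt) (dvW _ Ww) mul1r mulr1 dvq.
  apply: rg_mul => //; first exact: IH.
  exact: rg_gen.
have inrg h : rat_generated q (dv h).
  have [v av] : exists v, act alpha h = v by exists (act alpha h).
  exact: key v (clos_rt_rtn1 _ _ _ _ (conE alpha v)) h av.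
split.
  move=> U cU; apply/seteqP; split.
    move=> r [h hr]; have := ix_indep cU cW hr (hdv h); move=> ->.
    exact: inrg.
  move=> r hr.
  have [h <-] : exists h, dv h = r.
    apply: (rg_min (S := [set r | exists h, dv h = r])) hr.
    - by exists (gone T); apply: dvW; exact: sg1.
    - by move=> x y [h1 <-] [h2 <-]; exists (gmul T h2 h1); rewrite dvM.
    - by move=> x [h1 <-]; exists (ginv T h1); rewrite dvV.
    - by move=> i; exists (g i); exact: dvq.
  have [r' hr'] := ix_ex cU (cos_conj h cU).
  exists h; rewrite -(ix_indep cU cW hr' (hdv h)); exact: hr'.
have [k [c [cpos cind ceq]]] := free_rg qpos.
by exists k, c.
Qed.
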